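(* Let $X,Y$ be continuous processes. Then $\int_0^\cdot X\,d^\circ Y$ exists if and only if the Lévy area $L(X,Y)$ exists, and in that case $2\int_0^tX\,d^\circ Y=X_tY_t-X_0Y_0+L(X,Y)_t$.
   Context: $T>0$; continuous functions are extended by $f(t)=f(0)$ for $t\le0$, $f(t)=f(T)$ for $t>T$. Limits are in the ucp sense: uniformly in $t\in[0,T]$, in probability, as $\varepsilon\to0^+$. The symmetric integral $\int_0^tX\,d^\circ Y$ is the ucp limit of $\int_0^tX(s)\frac{Y(s+\varepsilon)-Y(s-\varepsilon)}{2\varepsilon}ds$, and the Lévy area is $L(X,Y)_t=\lim_{\varepsilon\to0^+}\int_0^t\frac{X_sY_{s+\varepsilon}-X_{s+\varepsilon}Y_s}{\varepsilon}ds$ (ucp limit). *)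

(* Defs.v *)
From HB Require Import structures.
From mathcomp Require Import all_boot all_order all_algebra.
From mathcomp Require Import all_classical all_reals all_analysis.
Set Implicit Arguments. Unset Strict Implicit. Unset Printing Implicit Defensive.
Import Order.TTheory GRing.Theory Num.Theory.
Import numFieldNormedType.Exports.
Local Open Scope classical_set_scope.
Local Open Scope ring_scope.

Section Defs.
Context {R : realType} {d : measure_display} {Omega : measurableType d}.

Definition ext (T : R) (f : R -> R) (t : R) : R :=
  f (Num.max 0 (Num.min t T)).

Definition continuous_process (T : R) (X : R -> Omega -> R) : Prop :=
  (forall t, measurable_fun setT (X t)) /\
  (forall w, {within `[0, T], continuous (fun t => X t w)}).

(* ucp convergence as eps -> 0+ of A eps to Z, uniformly in t in [0,T], in
   (outer) probability:  P*( sup_{t in [0,T]} |A eps t - Z t| > delta ) -> 0 *)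
Definition ucp_cvg (P : probability Omega R) (T : R)
    (A : R -> R -> Omega -> R) (Z : R -> Omega -> R) : Prop :=
  forall delta eta : R, 0 < delta -> 0 < eta ->
  exists eps0 : R, 0 < eps0 /\
    forall eps : R, 0 < eps -> eps < eps0 ->
      exists E : set Omega, measurable E /\ (P E <= eta%:E)%E /\
        [set w | exists t, 0 <= t <= T /\ delta < `|A eps t w - Z t w| ] `<=` E.

Definition sym_approx (T : R) (X Y : R -> Omega -> R) (eps t : R) (w : Omega) : R :=
  Rintegral lebesgue_measure `[0, t]
    (fun s => ext T (X ^~ w) s *
       ((ext T (Y ^~ w) (s + eps) - ext T (Y ^~ w) (s - eps)) / (2 * eps))).

Definition levy_approx (T : R) (X Y : R -> Omega -> R) (eps t : R) (w : Omega) : R :=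
  Rintegral lebesgue_measure `[0, t]
    (fun s => (ext T (X ^~ w) s * ext T (Y ^~ w) (s + eps)
               - ext T (X ^~ w) (s + eps) * ext T (Y ^~ w) s) / eps).

End Defs.

(* Main.v *)
Require Import Defs.
From HB Require Import structures.
From mathcomp Require Import all_boot all_order all_algebra.
From mathcomp Require Import all_classical all_reals all_analysis.
From mathcomp Require Import lra ring.
From mathcomp Require Import measurable_realfun.
Import Order.TTheory GRing.Theory Num.Theory.
Import numFieldNormedType.Exports.
Local Open Scope classical_set_scope.
Local Open Scope ring_scope.
Set Implicit Arguments. Unset Strict Implicit. Unset Printing Implicit Defensive.
Section S.
Context {R : realType}.

Definition clamp (T t : R) : R := Num.max 0 (Num.min t T).

Lemma clamp_in (T t : R) : 0 <= T -> 0 <= clamp T t <= T.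
Proof.
move=> T0; rewrite /clamp; apply/andP; split; first by rewrite le_max lexx.
by rewrite ge_max T0 ge_min lexx orbT.
Qed.

Lemma clamp_id (T t : R) : 0 <= t <= T -> clamp T t = t.
Proof.
by case/andP=> t0 tT; rewrite /clamp (min_l tT) (max_r t0).
Qed.

Lemma clamp_lip (T a b : R) : 0 <= T -> `|clamp T a - clamp T b| <= `|a - b|.
Proof.
move=> T0; rewrite /clamp.
case: (leP a T) => aT; case: (leP b T) => bT;
case: (leP 0 a) => a0; case: (leP 0 b) => b0;
rewrite ?(min_l aT) ?(min_r (ltW aT)) ?(min_l bT) ?(min_r (ltW bT));
rewrite ?(max_r a0) ?(max_l (ltW a0)) ?(max_r b0) ?(max_l (ltW b0))
  ?(max_r T0) ?subrr ?normr0 ?normr_ge0 //;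
have h1 := ler_norm (a - b); have h2 := ler_norm (b - a); rewrite distrC in h2;
rewrite !ler_norml; apply/andP; split; lra.
Qed.

Lemma ext_clamp (T : R) f t : ext T f t = f (clamp T t).
Proof. by []. Qed.

Lemma within_eps (T : R) (f : R -> R) s e : {within `[0, T], continuous f} ->
  0 <= s <= T -> 0 < e ->
  exists2 r, 0 < r & forall y, 0 <= y <= T -> `|y - s| < r -> `|f y - f s| < e.
Proof.
move=> cf sT e0.
have sA : `[0, T]%classic s by rewrite /= in_itv.
have := (proj1 (@subspace_continuousP _ `[0, T]%classic _ f) cf) s sA.
move/cvgrPdist_lt => /(_ e e0).
rewrite near_withinE; case/nbhs_ballP => r r0 Hr; exists r => // y yT ys.
rewrite distrC; apply: Hr; last by rewrite /= in_itv.
by rewrite -ball_normE /= distrC.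
Qed.


Lemma ext_cont (T : R) f : 0 <= T -> {within `[0, T], continuous f} ->
  continuous (ext T f).
Proof.
move=> T0 cf t; apply/cvgrPdist_lt => e e0.
have [r r0 H] := within_eps cf (clamp_in t T0) e0.
near=> y; rewrite !ext_clamp distrC; apply: H; first exact: clamp_in.
apply: le_lt_trans (clamp_lip _ _ T0) _.
near: y; apply/nbhs_ballP; exists r => // y.
by rewrite /ball /= distrC.
Unshelve. all: by end_near. Qed.

Lemma natSinv_lt (x : R) : 0 < x -> \forall n \near \oo, n.+1%:R^-1 < x.
Proof.
move=> x0; near=> n; rewrite invf_plt ?posrE ?ltr0Sn // -truncn_le_nat.
by near: n; exists (Num.truncn x^-1).
Unshelve. all: by end_near. Qed.

Lemma unif_cont (T : R) (g : R -> R) : continuous g -> forall e, 0 < e ->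
  exists2 r, 0 < r & forall s u, 0 <= s <= T -> 0 <= u <= T ->
    `|s - u| < r -> `|g s - g u| < e.
Proof.
move=> cg e e0; apply: contrapT => H.
have Hn : forall n : nat, exists p : R * R, [/\ 0 <= p.1 <= T, 0 <= p.2 <= T,
    `|p.1 - p.2| < (n.+1%:R)^-1 & e <= `|g p.1 - g p.2|].
  move=> n; apply: contrapT => Hn; apply: H; exists (n.+1%:R)^-1 => //.
  move=> s u sT uT su; rewrite ltNge; apply/negP => es.
  by apply: Hn; exists (s, u); split.
have [p Hp] := choice Hn.
pose s n := (p n).1.
have sF : (s @ \oo) `[0, T]%classic.
  rewrite /fmap /=; apply: filterE => n; have [h _ _ _] := Hp n; by rewrite /s /= in_itv.
have [l [/= l0T lc]] := @segment_compact R 0 T (s @ \oo) _ sF.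
have : g x @[x --> l] --> g l by exact: cg.
move/cvgrPdist_lt => /(_ (e / 2)); rewrite divr_gt0 //.
move=> /(_ isT) /nbhs_ballP[r r0 Hr].
have r20 : 0 < r / 2 by rewrite divr_gt0.
have FA : (s @ \oo) (s @` [set n | n.+1%:R^-1 < r / 2]).
  by apply: filterS (natSinv_lt r20) => n nr; exists n.
have [y [[n nr <-] yl]] := lc _ _ FA
  (nbhsx_ballx l (r / 2) r20).
case: (Hp n) => _ _ sn le_e.
have h1 : `|g l - g (p n).1| < e / 2.
  apply: Hr; rewrite -ball_normE /=.
  by move: yl; rewrite -ball_normE /= => /lt_le_trans; apply; rewrite ler_pdivrMr // ler_peMr // ?ler1n // ltW.
have h2 : `|g l - g (p n).2| < e / 2.
  apply: Hr; rewrite -ball_normE /=.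
  move: yl; rewrite -ball_normE /= => yl.
  have h := ler_distD (p n).1 l (p n).2.
  move: nr => /= nr.
  apply: le_lt_trans h _.
  by rewrite (splitr r) ltrD //; apply: lt_trans sn nr.
have := ler_distD (g l) (g (p n).1) (g (p n).2).
rewrite [`|g (p n).1 - g l|]distrC => h.
have : `|g (p n).1 - g (p n).2| < e.
  by apply: le_lt_trans h _; rewrite (splitr e) ltrD.
by rewrite ltNge le_e.
Qed.

Lemma bounded_on (T : R) (g : R -> R) : 0 <= T -> continuous g ->
  exists M, 0 <= M /\ forall s, 0 <= s <= T -> `|g s| <= M.
Proof.
move=> T0 cg.
have [c cT Hc] := @EVT_max R (fun x => `|g x|) 0 T T0
  (continuous_subspaceT (fun x => continuous_comp (cg x) (@norm_continuous _ _ _))).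
exists `|g c|; split => // s sT; apply: Hc; by rewrite in_itv.
Qed.


Lemma dens (T : R) (phi : R -> R) (s rho : R) : 0 < T -> continuous phi ->
  0 <= s <= T -> 0 < rho ->
  exists q : rat, [/\ 0 <= (ratr q : R) <= T, `|(ratr q : R) - s| < rho &
                      `|phi (ratr q) - phi s| < rho].
Proof.
move=> T0 cphi sT r0.
have /cvgrPdist_lt /(_ rho r0) := cphi s.
case/nbhs_ballP => r1 r10 H1.
pose r2 := Num.min rho r1.
have r20 : 0 < r2 by rewrite lt_min r0 r10.
pose lo := Num.max 0 (s - r2); pose hi := Num.min T (s + r2).
have lohi : lo < hi.
  case/andP: sT => s0 sT.
  by rewrite lt_min !gt_max; apply/andP; split; apply/andP; split; lra.
have ne : `]lo, hi[%classic !=set0.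
  by exists ((lo + hi) / 2); rewrite /= in_itv /= !midf_lt.
have [y [Oq [q _ qy]]] := @dense_rat R `]lo, hi[%classic ne
  (@interval_open R (BRight lo) (BLeft hi) isT isT).
subst y.
move: Oq; rewrite /= in_itv /= /lo /hi gt_max lt_min => /andP[/andP[q0 sq] /andP[qT qs]].
have qr2 : `|ratr q - s| < r2 by rewrite ltr_norml; apply/andP; split; lra.
exists q; split.
- by rewrite !ltW.
- by apply: lt_le_trans qr2 _; rewrite ge_min lexx.
- rewrite distrC; apply: H1; rewrite /ball /= distrC.
  by apply: lt_le_trans qr2 _; rewrite ge_min lexx orbT.
Qed.

Lemma shift_cont (f : R -> R) (c : R) : continuous f -> continuous (fun s => f (s + c)).
Proof.
move=> cf x; apply: continuous_comp; last exact: cf.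
by apply: continuousD; [exact: cvg_id | exact: cvg_cst].
Qed.

Lemma mul_cont (f g : R -> R) : continuous f -> continuous g ->
  continuous (fun s => f s * g s).
Proof. by move=> cf cg x; apply: continuousM; [exact: cf | exact: cg]. Qed.

Lemma sub_cont (f g : R -> R) : continuous f -> continuous g ->
  continuous (fun s => f s - g s).
Proof. by move=> cf cg x; apply: continuousB; [exact: cf | exact: cg]. Qed.

Lemma cst_cont (c : R) : continuous (fun _ : R => c).
Proof. by move=> x; exact: cvg_cst. Qed.


Lemma tri (a b c : R) : `|a - c| <= `|a - b| + `|b - c|.
Proof. exact: ler_distD. Qed.

Lemma approx4 (T r dl : R) (f g : R -> R) (s u v z : R) :
  0 < T -> continuous f -> continuous g -> 0 < r -> 0 < dl ->
  0 <= s <= T -> 0 <= u <= T -> 0 <= v <= T -> 0 <= z <= T ->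
  `|s - u| < r -> `|v - z| < r -> dl / 2 < `|f s * g v - f u * g z| ->
  exists q1 q2 q3 q4 : rat,
     (0 <= (ratr q1 : R) <= T) /\ (0 <= (ratr q2 : R) <= T) /\
     (0 <= (ratr q3 : R) <= T) /\ (0 <= (ratr q4 : R) <= T) /\
     `|(ratr q1 : R) - ratr q2| < 2 * r /\ `|(ratr q3 : R) - ratr q4| < 2 * r /\
     dl / 4 < `|f (ratr q1) * g (ratr q3) - f (ratr q2) * g (ratr q4)|.
Proof.
move=> T0 cf cg r0 d0 sT uT vT zT su vz H.
pose rho := Num.min (dl / 16) (r / 2).
have rho0 : 0 < rho by rewrite lt_min !divr_gt0.
have rho1 : rho <= dl / 16 by rewrite ge_min lexx.
have rho2 : rho <= r / 2 by rewrite ge_min lexx orbT.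
have [q1 [q1T d1 e1]] := dens (phi := fun a => f a * g v) T0
  (mul_cont cf (@cst_cont (g v))) sT rho0.
have [q3 [q3T d3 e3]] := dens (phi := fun b => f (ratr q1) * g b) T0
  (mul_cont (@cst_cont (f (ratr q1))) cg) vT rho0.
have [q2 [q2T d2 e2]] := dens (phi := fun a => f a * g z) T0
  (mul_cont cf (@cst_cont (g z))) uT rho0.
have [q4 [q4T d4 e4]] := dens (phi := fun b => f (ratr q2) * g b) T0
  (mul_cont (@cst_cont (f (ratr q2))) cg) zT rho0.
exists q1, q2, q3, q4; do 4 (split => //).
split.
  have h1 := tri (ratr q1) s (ratr q2).
  have h2 := tri s u (ratr q2).
  have h3 : `|u - ratr q2| = `|(ratr q2 : R) - u| by rewrite distrC.
  lra.
split.
  have h1 := tri (ratr q3) v (ratr q4).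
  have h2 := tri v z (ratr q4).
  have h3 : `|z - ratr q4| = `|(ratr q4 : R) - z| by rewrite distrC.
  lra.
move: e1 e2 e3 e4 H => /=.
set a := f (ratr q1) * g (ratr q3); set b := f (ratr q1) * g v.
set c := f s * g v; set a' := f (ratr q2) * g (ratr q4).
set b' := f (ratr q2) * g z; set c' := f u * g z.
move=> e1 e2 e3 e4 H.
have t1 := tri c a c'; have t2 := tri c b a; have t3 := tri a a' c'.
have t4 := tri a' b' c'.
have h1 : `|c - b| = `|b - c| by rewrite distrC.
have h2 : `|b - a| = `|a - b| by rewrite distrC.
lra.
Qed.

End S.

Section S2.
Context {R : realType}.
Local Notation mu := (@lebesgue_measure R).

Lemma is_derive_shiftr (f : R -> R) (x c df : R) : is_derive (x + c) 1 f df ->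
  is_derive x 1 (fun s => f (s + c)) df.
Proof.
case=> d1 d2.
have E : (fun h : R => h^-1 *: (((fun s => f (s + c)) \o shift x) (h *: 1) - f (x + c)))
  = (fun h : R => h^-1 *: ((f \o shift (x + c)) (h *: 1) - f (x + c))).
  by apply/funext => h /=; rewrite addrA.
apply: DeriveDef.
  by rewrite /derivable E.
by rewrite /derive E.
Qed.

Lemma cont_int (f : R -> R) a b : continuous f ->
  mu.-integrable `[a, b] (EFin \o f).
Proof.
move=> cf; apply: continuous_compact_integrable; first exact: segment_compact.
exact: continuous_subspaceT.
Qed.

Definition prim (h : R -> R) (u : R) := \int[mu]_(t in `[-1, u]) h t.

Lemma prim_derive (h : R -> R) (x : R) : continuous h -> -1 < x ->
  is_derive x 1 (prim h) (h x).
Proof.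
move=> ch x1.
have x1' : x < x + 1 by rewrite ltrDl ltr01.
have [d1 d2] := @continuous_FTC1_closed R h (-1) x (x + 1) x1'
  (cont_int _ _ ch) x1 (ch x).
by apply: DeriveDef => //; rewrite -derive1E.
Qed.


Lemma prim_cont (h : R -> R) (a b : R) : continuous h -> -1 < a ->
  {within `[a, b], continuous (prim h)}.
Proof.
move=> ch a1; apply: derivable_within_continuous => x.
rewrite in_itv /= => /andP[ax _].
by have [] := prim_derive ch (lt_le_trans a1 ax).
Qed.

Lemma prim_mvt (h : R -> R) (a b : R) : continuous h -> -1 < a -> a < b ->
  exists2 c, a < c < b & prim h b - prim h a = h c * (b - a).
Proof.
move=> ch a1 ab.
have [c cab E] := MVT ab (fun x xab => prim_derive ch
  (lt_trans a1 (andP (xab : (a < x < b))).1 : -1 < x)) (prim_cont ch a1).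
by exists c => //; move: cab; rewrite in_itv.
Qed.


Lemma shiftB_cont (h : R -> R) (eps : R) : continuous h ->
  continuous (fun s => h (s + eps) - h s).
Proof.
move=> ch x; apply: continuousB; last exact: ch.
apply: continuous_comp; last exact: ch.
by apply: continuousD; [exact: cvg_id | exact: cvg_cst].
Qed.

Lemma key_int (h : R -> R) (eps t : R) : continuous h -> 0 < eps -> 0 < t ->
  \int[mu]_(s in `[0, t]) (h (s + eps) - h s) =
  (prim h (t + eps) - prim h t) - (prim h eps - prim h 0).
Proof.
move=> ch e0 t0.
pose K := fun s => prim h (s + eps) - prim h s.
have dK : forall x : R, -1 < x -> is_derive x 1 K (h (x + eps) - h x).
  move=> x x1.
  have xe : -1 < x + eps by apply: lt_le_trans x1 _; rewrite lerDl ltW.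
  have A := is_derive_shiftr (prim_derive ch xe).
  have B := prim_derive ch x1.
  exact: (is_deriveB A B).
have cK : forall x : R, -1 < x -> K @ x --> K x.
  move=> x x1; apply: differentiable_continuous; apply/derivable1_diffP.
  by have [] := dK x x1.
have m10 : -1 < (0 : R) by rewrite ltrN10.
have hd : derivable_oo_LRcontinuous K 0 t.
  split.
  + move=> x; rewrite in_itv /= => /andP[x0 _].
    by have [] := dK x (lt_trans m10 x0).
  + exact/cvg_at_right_filter/cK.
  + exact/cvg_at_left_filter/cK/(lt_trans m10 t0).
have hK : {in `]0, t[, (K^`())%classic =1 (fun s => h (s + eps) - h s)}.
  move=> x; rewrite in_itv /= => /andP[x0 _].
  have dKx := dK x (lt_trans m10 x0).
  by rewrite derive1E derive_val.
have := @continuous_FTC2 R (fun s => h (s + eps) - h s) K 0 t t0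
  (continuous_subspaceT (shiftB_cont ch)) hd hK.
move=> E; rewrite /Rintegral E -EFinB /= /K add0r.
by [].
Qed.


Lemma det (x y : R -> R) (eps t : R) : continuous x -> continuous y ->
  0 < eps -> 0 < t ->
  exists2 c, t < c < t + eps & exists2 c', 0 < c' < eps &
  2 * \int[mu]_(s in `[0, t]) (x s * ((y (s + eps) - y (s - eps)) / (2 * eps)))
  - \int[mu]_(s in `[0, t]) ((x s * y (s + eps) - x (s + eps) * y s) / eps)
  = x c * y (c - eps) - x c' * y (c' - eps).
Proof.
move=> cx cy e0 t0.
pose h s := x s * y (s - eps).
have ch : continuous h.
  by apply: mul_cont => //; apply: shift_cont.
have cS : continuous (fun s => x s * ((y (s + eps) - y (s - eps)) / (2 * eps))).
  apply: mul_cont => //; apply: mul_cont; last exact: cst_cont.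
  by apply: sub_cont; apply: shift_cont.
have cL : continuous (fun s => (x s * y (s + eps) - x (s + eps) * y s) / eps).
  apply: mul_cont; last exact: cst_cont.
  by apply: sub_cont; apply: mul_cont => //; apply: shift_cont.
have m1t : -1 < t by apply: lt_trans t0; rewrite ltrN10.
have m10 : -1 < (0 : R) by rewrite ltrN10.
have te : t < t + eps by rewrite ltrDl.
have [c ct Ec] := prim_mvt ch m1t te.
have [c' c0 Ec'] := prim_mvt ch m10 e0.
exists c => //; exists c' => //.
rewrite -RintegralZl //; last exact: cont_int.
rewrite -RintegralB //; try exact: cont_int.
transitivity (\int[mu]_(s in `[0, t]) ((h (s + eps) - h s) * eps^-1)).
  apply: eq_Rintegral => s _; rewrite /h addrK; field.
  by rewrite gt_eqF.
rewrite RintegralZr //; last exact/cont_int/shiftB_cont.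
rewrite key_int // Ec Ec' /h; field.
  by rewrite gt_eqF.
by apply: cont_int; apply: mul_cont; [exact: cst_cont | exact: cS].
Qed.


Lemma clamp_idem (T a : R) : 0 <= T -> clamp T (clamp T a) = clamp T a.
Proof. by move=> T0; rewrite clamp_id // clamp_in. Qed.

Lemma ext_clampE (T : R) f a : 0 <= T -> ext T f (clamp T a) = ext T f a.
Proof. by move=> T0; rewrite !ext_clamp clamp_idem. Qed.

Lemma det_bad (T : R) (f g : R -> R) (t eps r dl : R) : 0 < T ->
  {within `[0, T], continuous f} -> {within `[0, T], continuous g} ->
  0 < dl -> 0 < eps -> eps <= r -> 0 <= t <= T ->
  dl < `| 2 * \int[mu]_(s in `[0, t]) (ext T f s * ((ext T g (s + eps) - ext T g (s - eps)) / (2 * eps)))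
        - \int[mu]_(s in `[0, t]) ((ext T f s * ext T g (s + eps) - ext T f (s + eps) * ext T g s) / eps)
        - (f t * g t - f 0 * g 0)| ->
  exists q1 q2 q3 q4 : rat,
     (0 <= (ratr q1 : R) <= T) /\ (0 <= (ratr q2 : R) <= T) /\
     (0 <= (ratr q3 : R) <= T) /\ (0 <= (ratr q4 : R) <= T) /\
     `|(ratr q1 : R) - ratr q2| < 2 * r /\ `|(ratr q3 : R) - ratr q4| < 2 * r /\
     dl / 4 < `|ext T f (ratr q1) * ext T g (ratr q3) - ext T f (ratr q2) * ext T g (ratr q4)|.
Proof.
move=> T0 cf cg d0 e0 er tT.
have T0' := ltW T0.
have cx := ext_cont T0' cf; have cy := ext_cont T0' cg.
have r0 : 0 < r by apply: lt_le_trans er.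
have E0 : forall a, 0 <= a <= T -> f a = ext T f a by move=> a aT; rewrite ext_clamp clamp_id.
have G0 : forall a, 0 <= a <= T -> g a = ext T g a by move=> a aT; rewrite ext_clamp clamp_id.
have z0 : 0 <= (0:R) <= T by rewrite lexx T0'.
rewrite (E0 t tT) (G0 t tT) (E0 0 z0) (G0 0 z0).
have [->|tn0] := eqVneq t 0.
  rewrite set_itv1 !Rintegral_set1 mulr0 !subrr normr0 => h.
  by have := lt_trans d0 h; rewrite ltxx.
have t0 : 0 < t by rewrite lt_neqAle eq_sym tn0; case/andP: tT.
have [c ct [c' c0 ->]] := det cx cy e0 t0.
set A := ext T f c * _ - _; set B := ext T f t * _ - _.
have -> : A - B = (ext T f c * ext T g (c - eps) - ext T f t * ext T g t)
   - (ext T f c' * ext T g (c' - eps) - ext T f 0 * ext T g 0) by rewrite /A /B; ring.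
move=> h.
have [h1|h1] : dl / 2 < `|ext T f c * ext T g (c - eps) - ext T f t * ext T g t| \/
    dl / 2 < `|ext T f c' * ext T g (c' - eps) - ext T f 0 * ext T g 0|.
  case: (ltP (dl / 2) `|ext T f c * ext T g (c - eps) - ext T f t * ext T g t|) => h1; first by left.
  case: (ltP (dl / 2) `|ext T f c' * ext T g (c' - eps) - ext T f 0 * ext T g 0|) => h2; first by right.
  have := ler_normB (ext T f c * ext T g (c - eps) - ext T f t * ext T g t)
    (ext T f c' * ext T g (c' - eps) - ext T f 0 * ext T g 0).
  lra.
- apply: (@approx4 R T r dl (ext T f) (ext T g) (clamp T c) t (clamp T (c - eps)) t) => //.
  + exact: clamp_in.
  + exact: clamp_in.
  + have := clamp_lip c t T0'; rewrite (clamp_id tT) => hl; apply: le_lt_trans hl _.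
    case/andP: ct => ??; rewrite ltr_norml; apply/andP; split; lra.
  + have := clamp_lip (c - eps) t T0'; rewrite (clamp_id tT) => hl; apply: le_lt_trans hl _.
    case/andP: ct => ??; rewrite ltr_norml; apply/andP; split; lra.
  + by rewrite !ext_clampE.
- apply: (@approx4 R T r dl (ext T f) (ext T g) (clamp T c') 0 (clamp T (c' - eps)) 0) => //.
  + exact: clamp_in.
  + exact: clamp_in.
  + have := clamp_lip c' 0 T0'; rewrite (clamp_id z0) => hl; apply: le_lt_trans hl _.
    case/andP: c0 => ??; rewrite ltr_norml; apply/andP; split; lra.
  + have := clamp_lip (c' - eps) 0 T0'; rewrite (clamp_id z0) => hl; apply: le_lt_trans hl _.
    case/andP: c0 => ??; rewrite ltr_norml; apply/andP; split; lra.
  + by rewrite !ext_clampE.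
Qed.

End S2.

Section S3.
Context {R : realType} {d : measure_display} {Omega : measurableType d}.
Variable (P : probability Omega R).

Lemma aux_frac (a x : R) : 0 <= a -> 0 < x -> a * (x / (2 * (a + 1))) <= x / 2.
Proof.
move=> a0 x0.
have a1 : a + 1 != 0 by rewrite gt_eqF // ltr_wpDl.
have -> : a * (x / (2 * (a + 1))) = x / 2 * (a / (a + 1)) by field.
apply: ler_piMr; first by rewrite divr_ge0 // ltW.
by rewrite ler_pdivrMr ?mul1r ?lerDl // ltr_wpDl.
Qed.

Lemma ucp_comb (T : R) (A B C : R -> R -> Omega -> R) (Z1 Z2 Z3 : R -> Omega -> R)
    (a b : R) : 0 <= a -> 0 <= b ->
  ucp_cvg P T A Z1 -> ucp_cvg P T B Z2 ->
  (forall eps t w, 0 < eps -> 0 <= t <= T ->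
     `|C eps t w - Z3 t w| <= a * `|A eps t w - Z1 t w| + b * `|B eps t w - Z2 t w|) ->
  ucp_cvg P T C Z3.
Proof.
move=> a0 b0 hA hB hC delta eta d0 e0.
have da : 0 < delta / (2 * (a + 1)) by rewrite divr_gt0 // mulr_gt0 // ltr_wpDl.
have db : 0 < delta / (2 * (b + 1)) by rewrite divr_gt0 // mulr_gt0 // ltr_wpDl.
have e2 : 0 < eta / 2 by rewrite divr_gt0.
have [e1 [e10 H1]] := hA _ _ da e2.
have [e2' [e20 H2]] := hB _ _ db e2.
exists (Num.min e1 e2'); split; first by rewrite lt_min e10 e20.
move=> eps eps0; rewrite lt_min => /andP[ee1 ee2].
have [E1 [mE1 [PE1 sE1]]] := H1 eps eps0 ee1.
have [E2 [mE2 [PE2 sE2]]] := H2 eps eps0 ee2.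
exists (E1 `|` E2); split; first exact: measurableU.
split.
  apply: le_trans (measureU2 _ mE1 mE2) _.
  by rewrite (splitr eta) EFinD; exact: leeD.
move=> w [t [tT dt]]; have := hC eps t w eps0 tT.
case: (ltP (delta / (2 * (a + 1))) `|A eps t w - Z1 t w|) => h1.
  by move=> _; left; apply: sE1; exists t.
case: (ltP (delta / (2 * (b + 1))) `|B eps t w - Z2 t w|) => h2.
  by move=> _; right; apply: sE2; exists t.
move=> h; exfalso.
have : a * `|A eps t w - Z1 t w| + b * `|B eps t w - Z2 t w| <= delta.
  rewrite (splitr delta); apply: lerD.
    by apply: le_trans (aux_frac a0 d0); apply: ler_wpM2l.
  by apply: le_trans (aux_frac b0 d0); apply: ler_wpM2l.
by move=> h'; have := lt_le_trans dt (le_trans h h'); rewrite ltxx.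
Qed.

Lemma small_cover (S : set Omega) :
  (forall eta : R, 0 < eta -> exists E, measurable E /\ (P E <= eta%:E)%E /\ S `<=` E) ->
  P.-negligible S.
Proof.
move=> H.
have H' : forall n : nat, exists E, measurable E /\ (P E <= (n.+1%:R^-1)%:E)%E /\ S `<=` E.
  by move=> n; apply: H; rewrite invr_gt0 ltr0Sn.
have [E HE] := choice H'.
exists (\bigcap_n E n); split.
- by apply: bigcapT_measurable => n; have [] := HE n.
- have mA : measurable (\bigcap_n E n) by apply: bigcapT_measurable => n; have [] := HE n.
  have le : forall n, (P (\bigcap_n E n) <= (n.+1%:R^-1)%:E)%E.
    move=> n; have [mE [PE _]] := HE n; apply: le_trans PE.
    by apply: le_measure; rewrite ?inE //; exact: bigcap_inf.
  have fin : P (\bigcap_n E n) \is a fin_num.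
    by rewrite ge0_fin_numE // (le_lt_trans (probability_le1 P mA)) // ltry.
  rewrite -(fineK fin); congr (_%:E).
  apply/eqP; rewrite eq_le; apply/andP; split; last first.
    by rewrite fine_ge0.
  rewrite leNgt; apply/negP => r0.
  have [N _ HN] := natSinv_lt r0.
  have := le N; rewrite -(fineK fin) lee_fin => h.
  by have := lt_le_trans (HN N (leqnn N)) h; rewrite ltxx.
- by move=> w Sw n _; have [_ [_ ]] := HE n; apply.
Qed.


Lemma ucp_unique (T : R) (A : R -> R -> Omega -> R) (Z1 Z2 : R -> Omega -> R) :
  ucp_cvg P T A Z1 -> ucp_cvg P T A Z2 ->
  P.-negligible [set w | exists t, 0 <= t <= T /\ Z1 t w <> Z2 t w].
Proof.
move=> h1 h2.
have hc : ucp_cvg P T (fun _ t w => Z1 t w) Z2.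
  apply: (ucp_comb ler01 ler01 h1 h2) => eps t w _ _.
  rewrite !mul1r; have := ler_distD (A eps t w) (Z1 t w) (Z2 t w).
  by rewrite [X in _ <= X + _ -> _]distrC.
apply: (@negligibleS _ _ _ _ (\bigcup_k [set w | exists t, 0 <= t <= T /\
   k.+1%:R^-1 < `|Z1 t w - Z2 t w|])).
  move=> w [t [tT ne]].
  have n0 : 0 < `|Z1 t w - Z2 t w| by rewrite normr_gt0 subr_eq0; apply/eqP.
  have [N _ HN] := natSinv_lt n0.
  exists N => //; exists t; split => //; exact: (HN N (leqnn N)).
apply: negligible_bigcup => k; apply: small_cover => eta e0.
have k0 : 0 < k.+1%:R^-1 :> R by rewrite invr_gt0 ltr0Sn.
have [e1 [e10 H]] := hc (k.+1%:R^-1) eta k0 e0.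
have e20 : 0 < e1 / 2 by rewrite divr_gt0.
have e21 : e1 / 2 < e1 by rewrite ltr_pdivrMr // ltr_pMr // ltr1n.
have [E [mE [PE sE]]] := H (e1 / 2) e20 e21.
exists E; split => //; split => // w [t [tT ht]]; apply: sE; exists t; split => //.
Qed.


Lemma meas_const_and (K : Prop) (S : set Omega) : measurable S ->
  measurable [set w | K /\ S w].
Proof.
move=> mS; case: (pselect K) => k.
  by have -> : [set w | K /\ S w] = S by apply/seteqP; split => w /= //; case.
by have -> : [set w | K /\ S w] = set0 by apply/seteqP; split => w //= [].
Qed.

Lemma meas_gt (a : R) (phi : Omega -> R) : measurable_fun setT phi ->
  measurable [set w | a < `|phi w|].
Proof.
move=> mphi.
have mb : measurable_fun setT (fun w => a < `|phi w|).
  apply: measurable_realfun.measurable_fun_ltr; first exact: measurable_cst.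
  by apply: measurableT_comp; [exact: measurable_realfun.normr_measurable | exact: mphi].
have := mb measurableT [set true] I.
rewrite setTI.
by congr measurable; apply/seteqP; split => w /=.
Qed.

Lemma ucp_D (T : R) (X Y : R -> Omega -> R) : 0 < T ->
  continuous_process T X -> continuous_process T Y ->
  ucp_cvg P T (fun eps t w => 2 * sym_approx T X Y eps t w - levy_approx T X Y eps t w)
    (fun t w => X t w * Y t w - X 0 w * Y 0 w).
Proof.
move=> T0 [mX cX] [mY cY] delta eta d0 e0.
have T0' := ltW T0.
pose B (n : nat) := [set w | exists q1 q2 q3 q4 : rat,
     (0 <= (ratr q1 : R) <= T) /\ (0 <= (ratr q2 : R) <= T) /\
     (0 <= (ratr q3 : R) <= T) /\ (0 <= (ratr q4 : R) <= T) /\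
     `|(ratr q1 : R) - ratr q2| < 2 * n.+1%:R^-1 /\
     `|(ratr q3 : R) - ratr q4| < 2 * n.+1%:R^-1 /\
     delta / 4 < `|ext T (X ^~ w) (ratr q1) * ext T (Y ^~ w) (ratr q3)
                   - ext T (X ^~ w) (ratr q2) * ext T (Y ^~ w) (ratr q4)|].
have mB : forall n, measurable (B n).
  move=> n.
  have -> : B n = \bigcup_(q1 : rat) \bigcup_(q2 : rat) \bigcup_(q3 : rat)
      \bigcup_(q4 : rat) [set w |
     (0 <= (ratr q1 : R) <= T) /\ (0 <= (ratr q2 : R) <= T) /\
     (0 <= (ratr q3 : R) <= T) /\ (0 <= (ratr q4 : R) <= T) /\
     `|(ratr q1 : R) - ratr q2| < 2 * n.+1%:R^-1 /\
     `|(ratr q3 : R) - ratr q4| < 2 * n.+1%:R^-1 /\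
     delta / 4 < `|ext T (X ^~ w) (ratr q1) * ext T (Y ^~ w) (ratr q3)
                   - ext T (X ^~ w) (ratr q2) * ext T (Y ^~ w) (ratr q4)|].
    apply/seteqP; split => w /=.
      by case=> q1 [q2 [q3 [q4 H]]]; exists q1 => //; exists q2 => //;
        exists q3 => //; exists q4.
    by case=> q1 _ [q2 _ [q3 _ [q4 _ H]]]; exists q1, q2, q3, q4.
  apply: bigcupT_measurable_rat => q1; apply: bigcupT_measurable_rat => q2.
  apply: bigcupT_measurable_rat => q3; apply: bigcupT_measurable_rat => q4.
  do 6 apply: meas_const_and.
  apply: meas_gt.
  by apply: measurable_funB; apply: measurable_realfun.measurable_funM; [exact: mX|exact: mY|exact: mX|exact: mY].
have nB : nonincreasing_seq B.
  move=> m n mn; rewrite subsetEset => w [q1 [q2 [q3 [q4 [h1 [h2 [h3 [h4 [h5 [h6 h7]]]]]]]]]].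
  have le : 2 * n.+1%:R^-1 <= 2 * m.+1%:R^-1 :> R.
    by rewrite ler_pM2l // lef_pV2 ?posrE ?ltr0Sn // ler_nat ltnS.
  exists q1, q2, q3, q4; do 4 (split => //).
  by split; [exact: lt_le_trans h5 le | split => //; exact: lt_le_trans h6 le].
have B0 : \bigcap_n B n = set0.
  apply/seteqP; split => // w Bw.
  have cx := ext_cont T0' (cX w); have cy := ext_cont T0' (cY w).
  have [Mx [Mx0 hMx]] := bounded_on T0' cx.
  have [My [My0 hMy]] := bounded_on T0' cy.
  pose M := Mx + My + 1.
  have M0 : 0 < M by rewrite /M; lra.
  pose th := delta / (8 * M).
  have th0 : 0 < th by rewrite divr_gt0 // mulr_gt0.
  have thM : th * M + M * th <= delta / 4.
    rewrite /th le_eqVlt; apply/orP; left; apply/eqP; field; by rewrite gt_eqF.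
  have [rx rx0 Hx] := unif_cont T cx th0.
  have [ry ry0 Hy] := unif_cont T cy th0.
  have r0 : 0 < Num.min rx ry / 2 by rewrite divr_gt0 // lt_min rx0 ry0.
  have [N _ HN] := natSinv_lt r0.
  have := HN N (leqnn N) => /= hN.
  have [q1 [q2 [q3 [q4 [h1 [h2 [h3 [h4 [h5 [h6 h7]]]]]]]]]] := Bw N I.
  have hr : 2 * N.+1%:R^-1 < Num.min rx ry :> R.
    by move: hN; rewrite ltr_pdivlMr // mulrC.
  move: hr; rewrite lt_min => /andP[hrx hry].
  have a1 := Hx _ _ h1 h2 (lt_trans h5 hrx).
  have a2 := Hy _ _ h3 h4 (lt_trans h6 hry).
  have b1 := hMy _ h3; have b2 := hMx _ h2.
  move: h7.
  set x1 := ext T (X ^~ w) (ratr q1); set x2 := ext T (X ^~ w) (ratr q2).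
  set y3 := ext T (Y ^~ w) (ratr q3); set y4 := ext T (Y ^~ w) (ratr q4).
  move: a1 a2 b1 b2; rewrite -/x1 -/x2 -/y3 -/y4 => a1 a2 b1 b2.
  have -> : x1 * y3 - x2 * y4 = (x1 - x2) * y3 + x2 * (y3 - y4) by ring.
  have := ler_normD ((x1 - x2) * y3) (x2 * (y3 - y4)); rewrite !normrM => hs.
  have p1 : `|x1 - x2| * `|y3| <= th * M.
    apply: ler_pM => //; first exact: ltW.
    by apply: le_trans b1 _; rewrite /M; lra.
  have p2 : `|x2| * `|y3 - y4| <= M * th.
    apply: ler_pM => //; last exact: ltW.
    by apply: le_trans b2 _; rewrite /M; lra.
  move=> h7; have := lt_le_trans h7 (le_trans hs (lerD p1 p2)).
  by move/lt_le_trans => /(_ _ thM); rewrite ltxx.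
have hcv := @nonincreasing_cvg_mu _ _ _ P B
  (le_lt_trans (probability_le1 P (mB 0%N)) (ltry 1)) mB (bigcapT_measurable mB) nB.
rewrite B0 measure0 in hcv.
have := hcv _ (@nbhs_open_ereal_lt R 0 (fun=> eta) e0).
case=> N _ HN.
have PN : (P (B N) <= eta%:E)%E by apply/ltW; exact: (HN N (leqnn N)).
exists (N.+1%:R^-1); split; first by rewrite invr_gt0 ltr0Sn.
move=> eps eps0 epsN; exists (B N); split; first exact: mB.
split => // w [t [tT ht]].
exact: (det_bad T0 (cX w) (cY w) d0 eps0 (ltW epsN) tT ht).
Qed.

End S3.

Unset Implicit Arguments.

Theorem proposition4p8 (R : realType) (d : measure_display) (Omega : measurableType d)
    (P : probability Omega R) (T : R) (hT : 0 < T) (X Y : R -> Omega -> R)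
    (hX : continuous_process T X) (hY : continuous_process T Y) :
  ((exists I : R -> Omega -> R, ucp_cvg P T (sym_approx T X Y) I) <->
   (exists L : R -> Omega -> R, ucp_cvg P T (levy_approx T X Y) L)) /\
  (forall I L : R -> Omega -> R,
     ucp_cvg P T (sym_approx T X Y) I ->
     ucp_cvg P T (levy_approx T X Y) L ->
     P.-negligible [set w | exists t, 0 <= t <= T /\
        2 * I t w <> X t w * Y t w - X 0 w * Y 0 w + L t w]).
Proof.
have hD := ucp_D P hT hX hY.
have toL : forall I, ucp_cvg P T (sym_approx T X Y) I ->
    ucp_cvg P T (levy_approx T X Y)
      (fun t w => 2 * I t w - (X t w * Y t w - X 0 w * Y 0 w)).
  move=> I hI; apply: (ucp_comb (a := 2) (b := 1) _ _ hI hD) => //.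
  move=> eps t w _ _.
  set s := sym_approx T X Y eps t w; set l := levy_approx T X Y eps t w.
  set G := X t w * Y t w - X 0 w * Y 0 w.
  have -> : l - (2 * I t w - G) = 2 * (s - I t w) - (2 * s - l - G) by ring.
  rewrite mul1r; apply: le_trans (ler_normB _ _) _.
  by rewrite normrM ger0_norm.
split.
  split.
    by case=> I hI; exists (fun t w => 2 * I t w - (X t w * Y t w - X 0 w * Y 0 w)); exact: toL.
  case=> L hL.
  exists (fun t w => (L t w + (X t w * Y t w - X 0 w * Y 0 w)) / 2).
  have h2 : (0 : R) <= 2^-1 by rewrite invr_ge0.
  apply: (ucp_comb (a := 2^-1) (b := 2^-1) h2 h2 hL hD).
  move=> eps t w _ _.
  set s := sym_approx T X Y eps t w; set l := levy_approx T X Y eps t w.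
  set G := X t w * Y t w - X 0 w * Y 0 w.
  have -> : s - (L t w + G) / 2 = 2^-1 * (l - L t w) + 2^-1 * (2 * s - l - G) by field.
  apply: le_trans (ler_normD _ _) _.
  by rewrite !normrM ger0_norm.
move=> I L hI hL.
have := ucp_unique (toL I hI) hL.
apply: negligibleS => w [t [tT ne]]; exists t; split => //.
move=> E; apply: ne; rewrite -E; ring.
Qed.
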